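(* Let $n\in\{3,4\}$, let $S$ be an $n\times n$ magic square, and let $S'$ be any arrangement obtained from $S$ by interchanging the entries of two distinct cells. Then $E_{\mathrm{full}}(S')>E_{\mathrm{full}}(S)=0$, where \[ E_{\mathrm{full}}(T)=\sum_{k=0}^{n-2}\mathrm{Cov}(R_k,Z_T)^2+\sum_{\ell=0}^{n-2}\mathrm{Cov}(C_\ell,Z_T)^2+\mathrm{Cov}(D_{\mathrm{main}},Z_T)^2+\mathrm{Cov}(D_{\mathrm{anti}},Z_T)^2 \] for an arrangement $T=(t_{ij})$ with $Z_T(i,j)=t_{ij}-\frac{n^2+1}{2}$.
   Context: An arrangement is a bijection $(i,j)\mapsto t_{ij}$ from $\{0,\dots,n-1\}^2$ to $\{1,\dots,n^2\}$; it is a magic square if all rows, columns and both main diagonals sum to $n(n^2+1)/2$. $R_k(i,j)=1$ if $i=k$ else $0$; $C_\ell(i,j)=1$ if $j=\ell$ else $0$; $D_{\mathrm{main}}(i,j)=1$ if $i=j$ else $0$; $D_{\mathrm{anti}}(i,j)=1$ if $i+j=n-1$ else $0$. Functions on the grid are random variables under the uniform distribution on cells, with $\mathrm{Cov}(F,G)=\frac1{n^2}\sum_{i,j}(F(i,j)-\bar F)(G(i,j)-\bar G)$. *)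

(* Defs.v *)
From mathcomp Require Import all_boot all_order all_algebra.
Set Implicit Arguments. Unset Strict Implicit. Unset Printing Implicit Defensive.
Import Order.TTheory GRing.Theory Num.Theory.
Local Open Scope ring_scope.

Definition cell (n : nat) := ('I_n * 'I_n)%type.

(* an arrangement: a bijection from the cells onto {1,...,n^2};
   written out as: injective with values in {1,...,n^2} (the two sets have
   the same cardinality n^2). *)
Definition arrangement (n : nat) (t : cell n -> nat) : Prop :=
  injective t /\ (forall c, (1 <= t c <= n ^ 2)%N).

Definition magic_const (n : nat) : nat := (n * (n ^ 2 + 1)) %/ 2.

Definition magic_square (n : nat) (t : cell n -> nat) : Prop :=
  arrangement t /\
  (forall i : 'I_n, (\sum_(j < n) t (i, j))%N = magic_const n) /\
  (forall j : 'I_n, (\sum_(i < n) t (i, j))%N = magic_const n) /\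
  (\sum_(i < n) t (i, i))%N = magic_const n /\
  (\sum_(c : cell n | ((c.1 : nat) + c.2 == n - 1)%N) t c)%N = magic_const n.

Definition swap_cells (n : nat) (c1 c2 : cell n) (t : cell n -> nat) : cell n -> nat :=
  fun c => if c == c1 then t c2 else if c == c2 then t c1 else t c.

Definition mean (n : nat) (F : cell n -> rat) : rat :=
  (n ^ 2)%:R^-1 * \sum_(c : cell n) F c.

Definition cov (n : nat) (F G : cell n -> rat) : rat :=
  (n ^ 2)%:R^-1 * \sum_(c : cell n) (F c - mean F) * (G c - mean G).

Definition Rind (n k : nat) : cell n -> rat :=
  fun c => if (c.1 : nat) == k then 1 else 0.
Definition Cind (n l : nat) : cell n -> rat :=
  fun c => if (c.2 : nat) == l then 1 else 0.
Definition Dmain (n : nat) : cell n -> rat :=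
  fun c => if (c.1 : nat) == c.2 then 1 else 0.
Definition Danti (n : nat) : cell n -> rat :=
  fun c => if (c.1 + c.2 == n - 1)%N then 1 else 0.

Definition Z (n : nat) (t : cell n -> nat) : cell n -> rat :=
  fun c => (t c)%:R - ((n ^ 2 + 1)%:R / 2).

Definition E_full (n : nat) (t : cell n -> nat) : rat :=
  \sum_(k < n.-1) cov (@Rind n k) (Z t) ^+ 2
  + \sum_(l < n.-1) cov (@Cind n l) (Z t) ^+ 2
  + cov (@Dmain n) (Z t) ^+ 2 + cov (@Danti n) (Z t) ^+ 2.

(* Main.v *)
Require Import Defs.
From mathcomp Require Import all_boot all_order all_algebra.
From mathcomp Require Import ring lra zify.
Import Order.TTheory GRing.Theory Num.Theory.
Local Open Scope ring_scope.

Lemma sum_cell n (F : cell n -> rat) :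
  \sum_(c : cell n) F c = \sum_(i < n) \sum_(j < n) F (i, j).
Proof. by rewrite pair_big; apply: eq_bigr => -[i j]. Qed.

Lemma cov_eq n (F G : cell n -> rat) : \sum_c G c = 0 ->
  cov F G = (n ^ 2)%:R^-1 * \sum_c F c * G c.
Proof.
move=> H; rewrite /cov /mean H mulr0; congr (_ * _).
under eq_bigr do rewrite subr0.
under eq_bigr do rewrite mulrBl.
by rewrite sumrB -mulr_sumr H mulr0 subr0.
Qed.

Lemma magic_rat n :
  ((magic_const n)%:R : rat) = n%:R * ((n ^ 2 + 1)%:R / 2).
Proof.
have h : (magic_const n * 2 = n * (n ^ 2 + 1))%N.
  rewrite /magic_const divnK // dvdn2 oddM oddD oddX /=.
  by case: (odd n).
move/(congr1 (fun m => m%:R : rat)): h; rewrite !natrM => h.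
by rewrite mulrA -h mulfK.
Qed.

Lemma anti_sum n (G : cell n -> rat) :
  \sum_(c : cell n | ((c.1 : nat) + c.2 == n - 1)%N) G c
  = \sum_(i < n) G (i, rev_ord i).
Proof.
rewrite (eq_bigl (fun c : cell n => predT c.1 && (c.2 == rev_ord c.1))); last first.
  move=> [i j] /=; have hi := ltn_ord i; have hj := ltn_ord j.
  apply/eqP/eqP => [h|->]; last by rewrite /= ; lia.
  apply: val_inj => /=; lia.
symmetry.
rewrite (eq_bigr (fun i => \sum_(j | j == rev_ord i) G (i, j))); last first.
  by move=> i _; rewrite big_pred1_eq.
rewrite pair_big_dep; by apply: eq_big => -[i j].
Qed.

Lemma anti_sum_nat n (G : cell n -> nat) :
  (\sum_(c : cell n | ((c.1 : nat) + c.2 == n - 1)%N) G c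
  = \sum_(i < n) G (i, rev_ord i))%N.
Proof.
rewrite (eq_bigl (fun c : cell n => predT c.1 && (c.2 == rev_ord c.1))); last first.
  move=> [i j] /=; have hi := ltn_ord i; have hj := ltn_ord j.
  apply/eqP/eqP => [h|->]; last by rewrite /= ; lia.
  apply: val_inj => /=; lia.
symmetry.
rewrite (eq_bigr (fun i => \sum_(j | j == rev_ord i) G (i, j))); last first.
  by move=> i _; rewrite big_pred1_eq.
rewrite pair_big_dep; by apply: eq_big => -[i j].
Qed.

Lemma sum_delta n (F : cell n -> rat) a :
  \sum_c F c * (c == a)%:R = F a.
Proof.
rewrite (bigD1 a) //= eqxx mulr1 big1 ?addr0 // => c /negbTE ->.
by rewrite mulr0.
Qed.

Lemma Zswap n (t : cell n -> nat) c1 c2 (hc : c1 != c2) c :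
  Z (swap_cells c1 c2 t) c = Z t c +
    ((t c2)%:R - (t c1)%:R) * ((c == c1)%:R - (c == c2)%:R).
Proof.
rewrite /Z /swap_cells.
case: (eqVneq c c1) => [->|h1] /=.
  rewrite (negbTE hc) /=; ring.
case: (eqVneq c c2) => [->|h2] /=; ring.
Qed.

Lemma sum_swap n (t : cell n -> nat) c1 c2 (hc : c1 != c2) (F : cell n -> rat) :
  \sum_c F c * Z (swap_cells c1 c2 t) c =
  \sum_c F c * Z t c + ((t c2)%:R - (t c1)%:R) * (F c1 - F c2).
Proof.
set d := (_ - _ : rat).
have e : forall c, F c * Z (swap_cells c1 c2 t) c =
  F c * Z t c + (d * (F c * (c == c1)%:R) - d * (F c * (c == c2)%:R)).
  by move=> c; rewrite Zswap //; rewrite -/d; ring.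
rewrite (eq_bigr _ (fun c _ => e c)) big_split sumrB -!mulr_sumr !sum_delta.
by rewrite mulrBr.
Qed.

Section Magic.
Variables (n : nat) (S : cell n -> nat) (hS : magic_square S).

Lemma rowZ (i : 'I_n) : \sum_(j < n) Z S (i, j) = 0.
Proof.
case: hS => _ [hr _].
rewrite /Z sumrB -natr_sum hr sumr_const card_ord magic_rat; ring.
Qed.

Lemma colZ (j : 'I_n) : \sum_(i < n) Z S (i, j) = 0.
Proof.
case: hS => _ [_ [hc _]].
rewrite /Z sumrB -natr_sum hc sumr_const card_ord magic_rat; ring.
Qed.

Lemma sumZ : \sum_c Z S c = 0.
Proof. by rewrite sum_cell big1 // => i _; apply: rowZ. Qed.

Lemma RZ (k : nat) : \sum_c @Rind n k c * Z S c = 0.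
Proof.
rewrite sum_cell big1 // => i _.
rewrite /Rind /=; case: eqP => _.
  by under eq_bigr do rewrite mul1r; apply: rowZ.
by rewrite big1 // => j _; rewrite mul0r.
Qed.

Lemma CZ (l : nat) : \sum_c @Cind n l c * Z S c = 0.
Proof.
rewrite sum_cell exchange_big big1 // => j _.
rewrite /Cind /=; case: eqP => _.
  by under eq_bigr do rewrite mul1r; apply: colZ.
by rewrite big1 // => i _; rewrite mul0r.
Qed.

Lemma DmZ : \sum_c @Dmain n c * Z S c = 0.
Proof.
case: hS => _ [_ [_ [hd _]]].
rewrite sum_cell.
have -> : \sum_(i < n) \sum_(j < n) @Dmain n (i, j) * Z S (i, j)
   = \sum_(i < n) Z S (i, i).
  apply: eq_bigr => i _.
  rewrite (bigD1 i) //= big1 ?addr0.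
    by rewrite /Dmain /= eqxx mul1r.
  move=> j hj; rewrite /Dmain /=.
  have -> : ((i : nat) == j) = false.
    by apply/negbTE; move: hj; rewrite eq_sym.
  by rewrite mul0r.
rewrite /Z sumrB -natr_sum hd sumr_const card_ord magic_rat; ring.
Qed.

Lemma DaZ : \sum_c @Danti n c * Z S c = 0.
Proof.
case: hS => _ [_ [_ [_ ha]]].
rewrite (bigID (fun c : cell n => ((c.1 : nat) + c.2 == n - 1)%N)) /=.
rewrite [X in _ + X]big1 ?addr0; last first.
  by move=> c /negbTE h; rewrite /Danti h mul0r.
rewrite (eq_bigr (fun c => Z S c)); last by move=> c h; rewrite /Danti h mul1r.
rewrite anti_sum_nat in ha.
rewrite anti_sum /Z sumrB -natr_sum ha sumr_const card_ord magic_rat; ring.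
Qed.

End Magic.

Theorem mainTheorem9 (n : nat) (hn : n = 3%N \/ n = 4%N)
  (S : cell n -> nat) (hS : magic_square S) (c1 c2 : cell n) (hc : c1 != c2) :
  E_full S = 0 /\ E_full S < E_full (swap_cells c1 c2 S).
Proof.
have hZ := @sumZ n S hS.
have RZ := @RZ n S hS. have CZ := @CZ n S hS.
have DmZ := @DmZ n S hS. have DaZ := @DaZ n S hS.
have E0 : E_full S = 0.
  have c0 : forall F, \sum_c F c * Z S c = 0 -> cov F (Z S) = 0.
    by move=> F h; rewrite cov_eq // h mulr0.
  rewrite /E_full (c0 _ DmZ) (c0 _ DaZ) big1; last by move=> k _; rewrite c0 // expr0n.
  rewrite big1; last by move=> k _; rewrite c0 // expr0n.
  by rewrite expr0n /= !addr0.
split => //; rewrite E0.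
set S' := swap_cells c1 c2 S.
set d : rat := (S c2)%:R - (S c1)%:R.
have hZ' : \sum_c Z S' c = 0.
  under eq_bigr => c _ do rewrite -[Z S' c]mul1r.
  rewrite (@sum_swap n S c1 c2 hc (fun _ => 1)) subrr mulr0 addr0.
  by under eq_bigr do rewrite mul1r; exact: hZ.
have hcov : forall F, (\sum_c F c * Z S c = 0) ->
    cov F (Z S') = (n ^ 2)%:R^-1 * (d * (F c1 - F c2)).
  by move=> F hF; rewrite cov_eq // sum_swap // hF add0r.
have hd : d != 0.
  rewrite /d subr_eq0 eqr_nat; apply/negP => /eqP h.
  case: hS => [[inj _] _]; move: hc; by rewrite (inj _ _ h) eqxx.
have hn0 : (0 < n)%N by apply: leq_ltn_trans (ltn_ord c1.1).
have hN : (n ^ 2)%:R^-1 != 0 :> rat by rewrite invr_eq0 pnatr_eq0 expn_eq0; lia.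
have sq : forall x : rat, x != 0 -> 0 < x ^+ 2.
  by move=> x hx; rewrite lt_def sqrf_eq0 hx sqr_ge0.
rewrite /E_full.
set A := \sum_(k < n.-1) _. set B := \sum_(l < n.-1) _.
have hA : 0 <= A by apply: sumr_ge0 => k _; apply: sqr_ge0.
have hB : 0 <= B by apply: sumr_ge0 => k _; apply: sqr_ge0.
have h1 := sqr_ge0 (cov (@Dmain n) (Z S')).
have h2 := sqr_ge0 (cov (@Danti n) (Z S')).
suff : 0 < A \/ 0 < B by case=> h; lra.
case: (eqVneq c1.1 c2.1) => [ei|ni].
  right.
  have nj : c1.2 != c2.2.
    apply: contraNneq hc => e2; move: ei e2; case: (c1) => ??; case: (c2) => ?? /= -> ->; done.
  pose l := if (c1.2 < n.-1)%N then c1.2 else c2.2.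
  have hl : (l < n.-1)%N.
    rewrite /l; case: ifP => // /negbT; rewrite -leqNgt => h.
    move: nj (ltn_ord c1.2) (ltn_ord c2.2); rewrite -(inj_eq val_inj) /=; lia.
  rewrite /B (bigD1 (Ordinal hl)) //=.
  have hpos : cov (@Cind n l) (Z S') ^+ 2 > 0.
    apply: sq; rewrite hcov ?CZ // mulf_neq0 // mulf_neq0 //.
    have nj' : (c1.2 : nat) != c2.2 by rewrite -(inj_eq val_inj) in nj.
    rewrite /Cind /= /l; case: (c1.2 < n.-1)%N; rewrite eqxx.
      by rewrite (negbTE (_ : (c2.2 : nat) != c1.2)) ?subr0 ?oner_eq0 // eq_sym.
    by rewrite (negbTE nj') sub0r oppr_eq0 oner_eq0.
  have : 0 <= \sum_(i < n.-1 | i != Ordinal hl) cov (@Cind n i) (Z S') ^+ 2.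
    by apply: sumr_ge0 => ? _; apply: sqr_ge0.
  lra.
left.
pose k := if (c1.1 < n.-1)%N then c1.1 else c2.1.
have hk : (k < n.-1)%N.
  rewrite /k; case: ifP => // /negbT; rewrite -leqNgt => h.
  move: ni (ltn_ord c1.1) (ltn_ord c2.1); rewrite -(inj_eq val_inj) /=; lia.
rewrite /A (bigD1 (Ordinal hk)) //=.
have hpos : cov (@Rind n k) (Z S') ^+ 2 > 0.
  apply: sq; rewrite hcov ?RZ // mulf_neq0 // mulf_neq0 //.
  have ni' : (c1.1 : nat) != c2.1 by rewrite -(inj_eq val_inj) in ni.
  rewrite /Rind /= /k; case: (c1.1 < n.-1)%N; rewrite eqxx.
    by rewrite (negbTE (_ : (c2.1 : nat) != c1.1)) ?subr0 ?oner_eq0 // eq_sym.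
  by rewrite (negbTE ni') sub0r oppr_eq0 oner_eq0.
have : 0 <= \sum_(i < n.-1 | i != Ordinal hk) cov (@Rind n i) (Z S') ^+ 2.
  by apply: sumr_ge0 => ? _; apply: sqr_ge0.
lra.
Qed.
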